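(* For each $N\ge1$ let $\{a_n\}_{n=0}^{N-1},\{b_n\}_{n=0}^{N-1},\{c_n\}_{n=1}^{N}$ (depending on $N$) be real sequences with $c_n>0$, $a_{N-1}=0$, $b_{N-1}=\tfrac12$, $c_N=1$, satisfying for $n=1,\dots,N-1$ $$a_{n-1}=a_n\Big(\frac{1}{c_n^2+1}\Big)^{1/2}+b_n\Big(\frac{1}{c_n^2+1}\Big)^{3/2}c_n^2,\quad b_{n-1}=b_n\Big(\frac{1}{c_n^2+1}\Big)^{3/2}+\frac{c_n}{c_n^2+1},\quad -3b_nc_n+(c_n^2+1)^{1/2}(1-c_n^2)=0,$$ and with $\Delta t_N=1/N$, $\Sigma_0>0$, $\sigma_u>0$ define $\Sigma_n=\Sigma_{n-1}/(1+c_n^2)$, $\beta_n=c_n\sigma_u\Delta t_N^{1/2}\Sigma_{n-1}^{-1/2}$, $\lambda_n=\beta_n\Sigma_{n-1}/(\beta_n^2\Sigma_{n-1}+\sigma_u^2\Delta t_N)$ for $n=1,\dots,N$. Then for every $t\in(0,1)$, as $N\to\infty$: $c_{[Nt]}\to0$, $b_{[Nt]}\to\infty$, $a_{[Nt]}\to\infty$, and $$\frac{c_{[Nt]}}{\Delta t_N^{1/2}}\to\frac{\sqrt3}{3}\frac{1}{(1-t)^{1/2}},\quad b_{[Nt]}\Delta t_N^{1/2}\to\frac{\sqrt3}{3}(1-t)^{1/2},\quad a_{[Nt]}\Delta t_N^{1/2}\to\frac{\sqrt3}{6}(1-t)^{1/2},$$ $$\Sigma_{[Nt]}\to(1-t)^{1/3}\Sigma_0,\qquad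 \lambda_{[Nt]}\to\frac{\sqrt3\,\Sigma_0^{1/2}}{3(1-t)^{1/3}\sigma_u},\qquad \frac{\beta_{[Nt]}}{\Delta t_N}\to\frac{\sqrt3\,\sigma_u}{3(1-t)^{2/3}\Sigma_0^{1/2}}.$$
   Context: $[x]$ denotes the integer part of $x$. These sequences describe the equilibrium of the risk-seeking insider model (Model 3) of an $N$-period Kyle-type insider trading model, where $\Sigma_n$ is the conditional variance of the asset value after $n$ rounds, $\lambda_n$ the liquidity parameter and $\beta_n$ the insider's trading intensity; the claim concerns only the sequences as defined here. *)

(* Defs.v *)
From Stdlib Require Import Reals Lra Lia ZArith.
From Coquelicot Require Import Coquelicot.
Open Scope R_scope.

Definition dt (N : nat) : R := / INR N.

(* [N t] : integer part of N t (t > 0, so N t >= 0) *)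
Definition idx (N : nat) (t : R) : nat := Z.to_nat (Int_part (INR N * t)).

Fixpoint Sigma (S0 : R) (c : nat -> R) (n : nat) : R :=
  match n with
  | O => S0
  | S m => Sigma S0 c m / (1 + (c (S m))^2)
  end.

Definition beta (N : nat) (S0 su : R) (c : nat -> R) (n : nat) : R :=
  c n * su * sqrt (dt N) / sqrt (Sigma S0 c (n - 1)%nat).

Definition lambda (N : nat) (S0 su : R) (c : nat -> R) (n : nat) : R :=
  beta N S0 su c n * Sigma S0 c (n - 1)%nat /
  ((beta N S0 su c n)^2 * Sigma S0 c (n - 1)%nat + su^2 * dt N).

(* Main.v *)
Require Import Defs.
From Stdlib Require Import Reals Lra Lia ZArith.
From Coquelicot Require Import Coquelicot.
Open Scope R_scope.

Lemma step_closed (an bn am bm c : R) : 0 < c ->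
  am = an * sqrt (1 / (c^2 + 1)) + bn * (sqrt (1 / (c^2 + 1)))^3 * c^2 ->
  bm = bn * (sqrt (1 / (c^2 + 1)))^3 + c / (c^2 + 1) ->
  - 3 * bn * c + sqrt (c^2 + 1) * (1 - c^2) = 0 ->
  bn = sqrt (c^2+1) * (1 - c^2) / (3*c) /\
  bm = (1 + 2*c^2) / (3*c*(1+c^2)) /\
  am - bm/2 = (an - bn/2) / sqrt (c^2+1) - c^3 / (2*(1+c^2)).
Proof.
  intros Hc H1 H2 H3.
  set (s := sqrt (c^2+1)) in *.
  assert (Hs : 0 < s) by (apply sqrt_lt_R0; timeout 20 nra).
  assert (Hs2 : s * s = c^2 + 1) by (apply sqrt_sqrt; timeout 20 nra).
  assert (Hi : sqrt (1 / (c^2+1)) = / s).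
  { unfold s. rewrite <- sqrt_inv. f_equal. field. timeout 20 nra. }
  rewrite Hi in H1, H2.
  assert (Hbn : bn = s * (1 - c^2) / (3*c)).
  { assert (E : bn * (3*c) = s * (1 - c^2)) by lra.
    rewrite <- E. field. lra. }
  assert (Hbm : bm = (1 + 2*c^2) / (3*c*(1+c^2))).
  { rewrite H2, Hbn. replace (1 + c^2) with (s*s) by lra.
    replace (c^2+1) with (s*s) by lra. field. split; lra. }
  split; [exact Hbn|]. split; [exact Hbm|].
  assert (Hs3 : (/ s)^3 = / s * / (c^2+1)).
  { rewrite <- Hs2. field. lra. }
  rewrite H1, Hbm, Hbn, Hs3.
  clearbody s. field. split; [timeout 20 nra|]. split; lra.
Qed.

Lemma div_le_k (a b k : R) : 0 < b -> a <= k * b -> a / b <= k.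
Proof. intros Hb H. apply Rmult_le_reg_r with b; auto.
  replace (a / b * b) with a by (field; lra). lra. Qed.

Lemma step_ineq (an bn am bm c : R) : 0 < c -> 0 < bn ->
  bn = sqrt (c^2+1) * (1 - c^2) / (3*c) ->
  bm = (1 + 2*c^2) / (3*c*(1+c^2)) ->
  am - bm/2 = (an - bn/2) / sqrt (c^2+1) - c^3 / (2*(1+c^2)) ->
  c^2 < 1 /\ 3*bn*c <= 1 /\ bn^2 + 1/4 <= bm^2 /\ bm^2 <= bn^2 + 1/3 /\
  bn^2 + 1/3 - c^4/3 <= bm^2 /\ bn^2*(1+c^2)^3 <= bm^2 /\
  (c^2 <= 4/9 -> bm^2 <= bn^2*(1+c^2)^3*(1+60*c^6)) /\
  Rabs (am - bm/2) <= Rabs (an - bn/2) + c^3/2.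
Proof.
  intros Hc Hbn Ebn Ebm Eam.
  set (s := sqrt (c^2+1)) in *.
  assert (Hs : 0 < s) by (apply sqrt_lt_R0; timeout 20 nra).
  assert (Hs2 : s * s = c^2 + 1) by (apply sqrt_sqrt; timeout 20 nra).
  clearbody s.
  remember (c^2) as u eqn:Hud.
  assert (Hcc : c * c = u) by (rewrite Hud; ring).
  assert (Hu : 0 < u) by timeout 20 nra.
  assert (Hu1 : u < 1).
  { assert (0 < s * (1-u)). { rewrite Ebn in Hbn.
      apply Rmult_lt_reg_r with (/(3*c)). apply Rinv_0_lt_compat; lra.
      rewrite Rmult_0_l. exact Hbn. }
    timeout 20 nra. }
  assert (EX : bn^2 = (1+u)*(1-u)^2/(9*u)).
  { rewrite Ebn. replace ((s * (1 - u) / (3 * c))^2) with ((s*s) * (1 - u)^2 / (9 * (c*c))) by (field; lra).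
    rewrite Hs2, Hcc. field. lra. }
  assert (EY : bm^2 = (1+2*u)^2/(9*u*(1+u)^2)).
  { rewrite Ebm. replace (((1 + 2 * u) / (3 * c * (1 + u)))^2) with ((1 + 2 * u)^2 / (9 * (c*c) * (1 + u)^2)) by (field; lra).
    rewrite Hcc. reflexivity. }
  assert (ED : bm^2 - bn^2 = 1/3 - u^2*(1+u+u^2)/(9*(1+u)^2)).
  { rewrite EX, EY. field. split; lra. }
  assert (F0 : 0 <= u^2*(1+u+u^2)/(9*(1+u)^2)).
  { apply Rle_mult_inv_pos. timeout 20 nra. timeout 20 nra. }
  assert (F1 : u^2*(1+u+u^2)/(9*(1+u)^2) <= 1/12).
  { apply div_le_k. timeout 20 nra.
    assert (u^2 <= u) by timeout 20 nra. assert (u^3 <= u) by timeout 20 nra. assert (u^4 <= u) by timeout 20 nra.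
    timeout 20 nra. }
  assert (F2 : u^2*(1+u+u^2)/(9*(1+u)^2) <= u^2/3).
  { apply div_le_k. timeout 20 nra.
    assert (0 <= u^2 * (u^2 + 3*u + 2)) by timeout 20 nra. timeout 20 nra. }
  assert (Hs1 : 1 <= s) by timeout 20 nra.
  split; [lra|].
  split.
  { replace (3*bn*c) with (s*(1-u)) by (rewrite Ebn; field; lra).
    assert (0 <= s*(1-u)) by timeout 20 nra.
    assert ((s*(1-u))^2 <= 1).
    { replace ((s*(1-u))^2) with ((s*s)*(1-u)^2) by ring. rewrite Hs2.
      timeout 20 nra. }
    timeout 20 nra. }
  split; [lra|]. split; [lra|].
  split; [replace (c^4) with (u^2) by (rewrite Hud; ring); lra|].
  assert (EP : bm^2 - bn^2*(1+u)^3 =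
     u^3*(4+10*u+4*u^2-4*u^3-4*u^4-u^5)/(9*u*(1+u)^2)).
  { rewrite EX, EY. field. split; lra. }
  assert (Hq0 : 0 <= 4+10*u+4*u^2-4*u^3-4*u^4-u^5).
  { assert (u^2 <= u) by timeout 20 nra. assert (u^3 <= u^2) by timeout 20 nra. assert (u^4 <= u^3) by timeout 20 nra.
    assert (u^5 <= u^4) by timeout 20 nra. timeout 20 nra. }
  assert (Hq1 : 4+10*u+4*u^2-4*u^3-4*u^4-u^5 <= 18).
  { assert (u^2 <= u) by timeout 20 nra. assert (u^3 <= u^2) by timeout 20 nra. assert (u^4 <= u^3) by timeout 20 nra.
    assert (u^5 <= u^4) by timeout 20 nra. timeout 20 nra. }
  split.
  { assert (0 <= u^3*(4+10*u+4*u^2-4*u^3-4*u^4-u^5)/(9*u*(1+u)^2)).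
    { apply Rle_mult_inv_pos. apply Rmult_le_pos; [timeout 20 nra|lra]. timeout 20 nra. }
    lra. }
  split.
  { intro H49.
    replace (c^6) with (u^3) by (rewrite Hud; ring).
    assert (ER : bn^2*(1+u)^3*(60*u^3) = ((1+u)^6*(1-u)^2*60*u^3)/(9*u*(1+u)^2)).
    { rewrite EX. field. split; lra. }
    assert (u^3*(4+10*u+4*u^2-4*u^3-4*u^4-u^5)/(9*u*(1+u)^2) <= ((1+u)^6*(1-u)^2*60*u^3)/(9*u*(1+u)^2)).
    { unfold Rdiv. apply Rmult_le_compat_r.
      { left. apply Rinv_0_lt_compat. timeout 20 nra. }
      assert (1 <= (1+u)^6) by (apply pow_R1_Rle; lra).
      assert (25/81 <= (1-u)^2) by timeout 20 nra.
      assert (0 < u^3) by (apply pow_lt; lra).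
      assert (18 <= (1+u)^6*(1-u)^2*60).
      { assert (25/81 <= (1+u)^6*(1-u)^2).
        { replace (25/81) with (1 * (25/81)) by ring.
          apply Rmult_le_compat; lra. }
        lra. }
      replace ((1+u)^6*(1-u)^2*60*u^3) with (u^3 * ((1+u)^6*(1-u)^2*60)) by ring.
      apply Rmult_le_compat_l; lra. }
    assert (bn^2*(1+u)^3*(1+60*u^3) = bn^2*(1+u)^3 + bn^2*(1+u)^3*(60*u^3)) by ring.
    lra. }
  assert (Hem : am - bm/2 = (an - bn/2)/s - c^3/(2*(1+u))) by exact Eam.
  rewrite Hem.
  assert (Hc3 : 0 <= c^3/(2*(1+u))) by (apply Rle_mult_inv_pos; [apply pow_le; lra| lra]).
  assert (Hc3' : c^3/(2*(1+u)) <= c^3/2).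
  { apply div_le_k. lra. assert (0 < c^3) by (apply pow_lt; lra). timeout 20 nra. }
  assert (Habs : Rabs ((an - bn/2)/s) <= Rabs (an - bn/2)).
  { unfold Rdiv. rewrite Rabs_mult. rewrite (Rabs_right (/s)).
    2: { left. apply Rinv_0_lt_compat. lra. }
    assert (/ s <= 1). { rewrite <- Rinv_1. apply Rinv_le_contravar; lra. }
    assert (0 <= Rabs (an - bn/2)) by apply Rabs_pos.
    assert (0 < / s) by (apply Rinv_0_lt_compat; lra). timeout 20 nra. }
  eapply Rle_trans. apply Rabs_triang. rewrite Rabs_Ropp.
  rewrite (Rabs_right (c^3/(2*(1+u)))) by lra. lra.
Qed.

Lemma pot_lemma (X Y u : R): 1/4 <= X -> X + 1/4 <= Y -> Y <= X + 1/3 -> 0 <= u ->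
  u*X <= 1/9 -> X + 1/3 - u^2/3 <= Y -> X - (1/20)/X + 1/3 <= Y - (1/20)/Y.
Proof.
  intros H1 H2 H3 H4 H5 H6.
  assert (HX : 0 < X) by lra. assert (HY : 0 < Y) by lra.
  assert (A : (Y - X - 1/3) * (243 * X^2) >= -1).
  { assert (u^2 * X^2 <= 1/81).
    { replace (u^2*X^2) with ((u*X)^2) by ring.
      assert (0 <= u*X) by nra. nra. }
    assert (Y - X - 1/3 >= - u^2/3) by lra.
    assert (0 <= X^2) by nra. nra. }
  assert (B : 243 * X * (Y - X) >= 20 * Y) by nra.
  assert (E : (X - (1/20)/X + 1/3) - (Y - (1/20)/Y) =
     - (((Y - X - 1/3) * (243 * X^2) + 1) + (243*X*(Y-X) - 20*Y)/(20*Y)) / (243 * X^2)).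
  { field. split; lra. }
  assert (0 <= (243*X*(Y-X) - 20*Y)/(20*Y)).
  { apply Rle_mult_inv_pos; lra. }
  assert (0 < 243 * X^2) by nra.
  assert ((((Y - X - 1/3) * (243 * X^2) + 1) + (243*X*(Y-X) - 20*Y)/(20*Y)) / (243 * X^2) >= 0).
  { apply Rle_ge. apply Rle_mult_inv_pos; lra. }
  lra.
Qed.

Lemma e_pot (bn bm c : R) : 0 < bn -> 1/4 <= bn^2 -> bn^2 + 1/4 <= bm^2 ->
  bm^2 <= bn^2 + 1/3 -> 0 < c -> 3*bn*c <= 1 -> 0 < bm -> c^3/2 <= /bn - /bm.
Proof.
  intros H1 H2 H3 H4 H5 H6 H7.
  assert (Hbm2 : bm <= 2*bn) by nra.
  assert (Hlt : bn < bm) by nra.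
  assert (Hd : (bm - bn)*bn >= 1/12) by nra.
  assert (Hw : (c*bn)^3 <= 1/27).
  { assert (0 <= c*bn) by nra. assert (c*bn <= 1/3) by lra.
    replace (1/27) with ((1/3)^3) by field. apply pow_incr. lra. }
  assert (E : /bn - /bm = (bm - bn)/(bn*bm)) by (field; lra).
  rewrite E.
  assert (bn^3 * (c^3/2) <= 1/54).
  { replace (bn^3*(c^3/2)) with ((c*bn)^3/2) by field. lra. }
  assert (1/24 <= bn^3 * ((bm - bn)/(bn*bm))).
  { replace (bn^3 * ((bm - bn)/(bn*bm))) with (((bm - bn)*bn) * (bn / bm)) by (field; lra).
    assert (1/2 <= bn/bm).
    { apply Rmult_le_reg_r with bm. lra. replace (bn/bm*bm) with bn by (field; lra). lra. }
    assert (0 < bn/bm) by (apply Rdiv_lt_0_compat; lra).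
    nra. }
  assert (0 < bn^3) by (apply pow_lt; lra).
  nra.
Qed.

Lemma q_pot (X Y u : R) : 1/4 <= X -> X + 1/4 <= Y -> Y <= X + 1/3 -> 0 <= u -> u < 1 ->
  u*X <= 1/9 -> 60*u^3 <= 8*(/X - /Y).
Proof.
  intros H1 H2 H3 H4 H5 H6.
  assert (HX : 0 < X) by lra. assert (HY : 0 < Y) by lra.
  assert (u^2*X^2 <= 1/81).
  { replace (u^2*X^2) with ((u*X)^2) by ring. assert (0 <= u*X) by nra. nra. }
  assert (u^3 <= u^2) by nra.
  assert (E : /X - /Y = (Y - X)/(X*Y)) by (field; lra).
  rewrite E.
  assert (3/28 <= X^2 * ((Y - X)/(X*Y))).
  { replace (X^2 * ((Y - X)/(X*Y))) with ((Y-X) * (X/Y)) by (field; lra).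
    assert (3/7 <= X/Y).
    { apply Rmult_le_reg_r with Y. lra. replace (X/Y*Y) with X by (field; lra). lra. }
    nra. }
  assert (0 < X^2) by nra.
  nra.
Qed.

Lemma exp_le' (x y : R) : x <= y -> exp x <= exp y.
Proof. intros [H|H]. left; apply exp_increasing; auto. subst; lra. Qed.

Lemma q_step (Sp X Y u : R): 0 < Sp -> 0 < X -> 0 < u -> X*(1+u)^3 <= Y ->
  Y <= X*(1+u)^3*(1+60*u^3) -> 60*u^3 <= 8*(/X - /Y) ->
  Sp^3/Y <= (Sp/(1+u))^3/X /\
  (Sp/(1+u))^3/X * exp(-(8/X)) <= Sp^3/Y * exp(-(8/Y)).
Proof.
  intros HS HX Hu H1 H2 H3.
  assert (Hk : 0 < (1+u)^3) by (apply pow_lt; lra).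
  assert (HY : 0 < Y) by nra.
  assert (E : (Sp/(1+u))^3/X = Sp^3 / (X*(1+u)^3)) by (field; split; lra).
  rewrite E.
  assert (HS3 : 0 < Sp^3) by (apply pow_lt; lra).
  split.
  { unfold Rdiv. apply Rmult_le_compat_l. lra. apply Rinv_le_contravar. nra. lra. }
  assert (A : Sp^3/(X*(1+u)^3) <= Sp^3/Y * (1+60*u^3)).
  { replace (Sp^3/Y*(1+60*u^3)) with (Sp^3 / (Y / (1+60*u^3))).
    2:{ field. assert (0 < u^3) by (apply pow_lt; lra). split; lra. }
    unfold Rdiv. apply Rmult_le_compat_l. lra. apply Rinv_le_contravar.
    apply Rdiv_lt_0_compat. lra. assert (0 < u^3) by (apply pow_lt; lra). lra.
    apply Rmult_le_reg_r with (1+60*u^3). assert (0 < u^3) by (apply pow_lt; lra). lra.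
    replace (Y * / (1 + 60 * u ^ 3) * (1 + 60 * u ^ 3)) with Y.
    2:{ field. assert (0 < u^3) by (apply pow_lt; lra). lra. }
    lra. }
  assert (B : (1+60*u^3) * exp (-(8/X)) <= exp (-(8/Y))).
  { eapply Rle_trans. apply Rmult_le_compat_r. left. apply exp_pos. apply exp_ineq1_le.
    rewrite <- exp_plus. apply exp_le'. lra. }
  assert (0 < exp (-(8/X))) by apply exp_pos.
  assert (0 <= Sp^3/Y) by (apply Rle_mult_inv_pos; lra).
  apply Rle_trans with (Sp^3/Y * (1+60*u^3) * exp (-(8/X))).
  apply Rmult_le_compat_r; lra.
  rewrite Rmult_assoc. apply Rmult_le_compat_l; lra.
Qed.

Definition Hyp (a b c : nat -> R) (N : nat) : Prop :=
     (forall n : nat, (1 <= n <= N)%nat -> 0 < c n) /\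
     a (N - 1)%nat = 0 /\
     b (N - 1)%nat = 1 / 2 /\
     c N = 1 /\
     (forall n : nat, (1 <= n <= N - 1)%nat ->
        a (n - 1)%nat =
          a n * sqrt (1 / ((c n)^2 + 1))
          + b n * (sqrt (1 / ((c n)^2 + 1)))^3 * (c n)^2 /\
        b (n - 1)%nat =
          b n * (sqrt (1 / ((c n)^2 + 1)))^3 + c n / ((c n)^2 + 1) /\
        - 3 * b n * c n + sqrt ((c n)^2 + 1) * (1 - (c n)^2) = 0).

Lemma back_ind (N : nat) (f : nat -> R) (d : R) :
  (forall n, (1 <= n <= N-1)%nat -> f n + d <= f (n-1)%nat) ->
  forall n, (n <= N-1)%nat -> f (N-1)%nat + INR (N-1-n) * d <= f n.
Proof.
  intros H n Hn. remember (N-1-n)%nat as k eqn:Hk. revert n Hn Hk.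
  induction k; intros n Hn Hk.
  - assert (n = N-1)%nat by lia. subst n. simpl. lra.
  - assert (H1 : (S n <= N-1)%nat) by lia.
    specialize (IHk (S n) H1 ltac:(lia)).
    specialize (H (S n) ltac:(lia)). simpl in H. replace (n - 0)%nat with n in H by lia.
    rewrite S_INR. lra.
Qed.

Lemma fwd_ind (N : nat) (f : nat -> R) :
  (forall n, (1 <= n <= N-1)%nat -> f n <= f (n-1)%nat) ->
  forall n, (n <= N-1)%nat -> f n <= f 0%nat.
Proof.
  intros H n. induction n; intros Hn. lra.
  specialize (H (S n) ltac:(lia)). simpl in H. replace (n - 0)%nat with n in H by lia.
  specialize (IHn ltac:(lia)). lra.
Qed.

Section G.
Variables (a b c : nat -> R) (N : nat).
Hypothesis HN : (1 <= N)%nat.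
Hypothesis H : Hyp a b c N.

Lemma cpos n : (1 <= n <= N)%nat -> 0 < c n.
Proof. destruct H as [H1 _]. apply H1. Qed.

Lemma closed n : (1 <= n <= N-1)%nat ->
  b n = sqrt (c n^2+1) * (1 - c n^2) / (3*c n) /\
  b (n-1)%nat = (1 + 2*c n^2) / (3*c n*(1+c n^2)) /\
  a (n-1)%nat - b (n-1)%nat/2 = (a n - b n/2) / sqrt (c n^2+1) - c n^3 / (2*(1+c n^2)).
Proof.
  intros Hn. destruct H as [_ [_ [_ [_ H5]]]]. destruct (H5 n Hn) as [E1 [E2 E3]].
  apply (step_closed _ _ _ _ _ (cpos n ltac:(lia)) E1 E2 E3).
Qed.

Lemma bpos n : (n <= N-1)%nat -> 0 < b n.
Proof.
  intros Hn. destruct (Nat.eq_dec n (N-1)) as [->|Hne].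
  - destruct H as [_ [_ [H3 _]]]. rewrite H3. lra.
  - destruct (closed (S n) ltac:(lia)) as [_ [E _]]. simpl in E.
    replace (n - 0)%nat with n in E by lia. rewrite E.
    assert (0 < c (S n)) by (apply cpos; lia).
    apply Rmult_lt_0_compat. nra. apply Rinv_0_lt_compat.
    apply Rmult_lt_0_compat. lra. nra.
Qed.

Lemma ineq n : (1 <= n <= N-1)%nat ->
  let bn := b n in let bm := b (n-1)%nat in let u := c n in
  u^2 < 1 /\ 3*bn*u <= 1 /\ bn^2 + 1/4 <= bm^2 /\ bm^2 <= bn^2 + 1/3 /\
  bn^2 + 1/3 - u^4/3 <= bm^2 /\ bn^2*(1+u^2)^3 <= bm^2 /\
  (u^2 <= 4/9 -> bm^2 <= bn^2*(1+u^2)^3*(1+60*u^6)) /\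
  Rabs (a (n-1)%nat - bm/2) <= Rabs (a n - bn/2) + u^3/2.
Proof.
  intros Hn. destruct (closed n Hn) as [E1 [E2 E3]].
  apply (step_ineq _ _ _ _ _ (cpos n ltac:(lia)) (bpos n ltac:(lia)) E1 E2 E3).
Qed.


Lemma bN1 : b (N-1)%nat = 1/2.
Proof. destruct H as [_ [_ [H3 _]]]. exact H3. Qed.

Lemma b_up n : (n <= N-1)%nat -> b n ^2 <= 1/4 + INR (N-1-n) / 3.
Proof.
  intros Hn.
  pose proof (back_ind N (fun k => - (b k ^2)) (-1/3)) as B.
  assert (B' : forall n, (1 <= n <= N-1)%nat -> - (b n^2) + -1/3 <= - (b (n-1)%nat ^2)).
  { intros k Hk. destruct (ineq k Hk) as [_ [_ [_ [I _]]]]. simpl in I. lra. }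
  specialize (B B' n Hn). cbv beta in B. rewrite bN1 in B. lra.
Qed.

Lemma b_lo n : (n <= N-1)%nat -> 1/4 + INR (N-1-n) / 4 <= b n ^2.
Proof.
  intros Hn.
  pose proof (back_ind N (fun k => b k ^2) (1/4)) as B.
  assert (B' : forall n, (1 <= n <= N-1)%nat -> b n^2 + 1/4 <= b (n-1)%nat ^2).
  { intros k Hk. destruct (ineq k Hk) as [_ [_ [I _]]]. simpl in I. lra. }
  specialize (B B' n Hn). cbv beta in B. rewrite bN1 in B. lra.
Qed.

Lemma b_q n : (n <= N-1)%nat -> 1/4 <= b n ^2.
Proof. intros Hn. pose proof (b_lo n Hn). pose proof (pos_INR (N-1-n)). lra. Qed.

Lemma b_lo2 n : (n <= N-1)%nat -> 1/20 + INR (N-1-n) / 3 <= b n ^2.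
Proof.
  intros Hn.
  pose proof (back_ind N (fun k => b k ^2 - (1/20)/(b k^2)) (1/3)) as B.
  assert (B' : forall n, (1 <= n <= N-1)%nat ->
     b n^2 - (1/20)/(b n^2) + 1/3 <= b (n-1)%nat ^2 - (1/20)/(b (n-1)%nat^2)).
  { intros k Hk. destruct (ineq k Hk) as [I1 [I2 [I3 [I4 [I5 _]]]]]. simpl in *.
    pose proof (b_q k ltac:(lia)). pose proof (bpos k ltac:(lia)).
    assert (0 < c k) by (apply cpos; lia).
    assert (0 <= c k ^2) by nra.
    assert (9 * (c k^2 * b k^2) <= 1). { replace (9 * (c k^2 * b k^2)) with ((3*b k*c k)^2) by ring.
        assert (0 <= 3*b k*c k) by nra. nra. }
    assert (b k^2 + 1/3 - (c k^2)^2/3 <= b (k-1)%nat^2) by (replace ((c k^2)^2) with (c k ^4) by ring; lra).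
    apply (pot_lemma _ _ (c k ^2)); lra. }
  specialize (B B' n Hn). cbv beta in B. rewrite bN1 in B.
  assert (0 <= (1/20) / (b n ^2)).
  { pose proof (bpos n Hn). apply Rle_mult_inv_pos. lra. nra. }
  replace ((1/2)^2) with (1/4) in B by field.
  replace ((1/20)/(1/4)) with (1/5) in B by field. lra.
Qed.

Lemma e_bd n : (n <= N-1)%nat -> Rabs (a n - b n/2) <= 9/4.
Proof.
  intros Hn.
  pose proof (back_ind N (fun k => - (Rabs (a k - b k/2) + / b k)) 0) as B.
  assert (B' : forall n, (1 <= n <= N-1)%nat ->
     - (Rabs (a n - b n/2) + / b n) + 0 <= - (Rabs (a (n-1)%nat - b (n-1)%nat/2) + / b (n-1)%nat)).
  { intros k Hk. destruct (ineq k Hk) as [I1 [I2 [I3 [I4 [I5 [_ [_ I8]]]]]]]. simpl in *.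
    pose proof (b_q k ltac:(lia)). pose proof (bpos k ltac:(lia)).
    pose proof (bpos (k-1) ltac:(lia)).
    assert (0 < c k) by (apply cpos; lia).
    pose proof (e_pot (b k) (b (k-1)%nat) (c k)) as EP.
    simpl in EP. assert (c k^3/2 <= / b k - / b (k-1)%nat) by (apply EP; lra).
    lra. }
  specialize (B B' n Hn). cbv beta in B. rewrite bN1 in B.
  destruct H as [_ [HA _]]. rewrite HA in B.
  replace (0 - 1/2/2) with (-(1/4)) in B by field. rewrite Rabs_Ropp, Rabs_right in B by lra.
  pose proof (bpos n Hn). assert (0 < / b n) by (apply Rinv_0_lt_compat; lra).
  replace (/ (1/2)) with 2 in B by field. lra.
Qed.


Lemma Sig_pos (S0 : R) m : 0 < S0 -> 0 < Sigma S0 c m.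
Proof.
  intros HS. induction m; simpl. exact HS.
  apply Rdiv_lt_0_compat. exact IHm. nra.
Qed.

Lemma q_facts (S0 : R) k : 0 < S0 -> (1 <= k <= N-1)%nat ->
  Sigma S0 c (k-1)%nat ^3 / b (k-1)%nat ^2 <= Sigma S0 c k ^3 / b k ^2 /\ Sigma S0 c k ^3 / b k ^2 * exp (-(8 / b k ^2)) <=
  Sigma S0 c (k-1)%nat ^3 / b (k-1)%nat ^2 * exp (-(8 / b (k-1)%nat ^2)).
Proof.
  intros HS Hk.
  destruct (ineq k Hk) as [I1 [I2 [I3 [I4 [I5 [I6 [I7 _]]]]]]]. cbv zeta in *.
  pose proof (b_q k ltac:(lia)). pose proof (bpos k ltac:(lia)).
  assert (0 < c k) by (apply cpos; lia).
  assert (Hux : c k ^2 * b k ^2 <= 1/9).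
  { assert (9 * (c k^2 * b k^2) <= 1). { replace (9 * (c k^2 * b k^2)) with ((3*b k*c k)^2) by ring.
        assert (0 <= 3*b k*c k) by nra. nra. } lra. }
  assert (Hu49 : c k ^2 <= 4/9) by nra.
  specialize (I7 Hu49).
  pose proof (q_pot (b k ^2) (b (k-1)%nat ^2) (c k ^2)) as QP.
  assert (60 * (c k^2)^3 <= 8 * (/ b k ^2 - / b (k-1)%nat ^2)).
  { apply QP; try lra; nra. }
  destruct k as [|k']. lia.
  replace (S k' - 1)%nat with k' in * by lia.
  change (Sigma S0 c (S k')) with (Sigma S0 c k' / (1 + c (S k') ^2)).
  assert (Hr6 : b k' ^ 2 <= b (S k') ^ 2 * (1 + c (S k') ^ 2) ^ 3 * (1 + 60 * (c (S k') ^ 2) ^ 3)).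
  { replace ((c (S k')^2)^3) with (c (S k')^6) by ring. exact I7. }
  destruct (q_step (Sigma S0 c k') (b (S k')^2) (b k'^2) (c (S k')^2)
     ltac:(apply Sig_pos; auto) ltac:(nra) ltac:(nra) I6 Hr6 H3) as [Q1 Q2].
  split. exact Q1. exact Q2.
Qed.

Lemma Q_bd (S0 : R) n : 0 < S0 -> (n <= N-1)%nat ->
  S0^3 / b 0%nat ^2 <= Sigma S0 c n ^3 / b n ^2 <= S0^3 / b 0%nat ^2 * exp (8 / b n ^2).
Proof.
  intros HS Hn. split.
  - pose proof (fwd_ind N (fun k => - (Sigma S0 c k ^3 / b k ^2))) as F.
    cbv beta in F. simpl Sigma in F at 2.
    assert (F' : - (Sigma S0 c n ^ 3 / b n ^ 2) <= - (S0 ^ 3 / b 0%nat ^ 2)).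
    { apply F; auto. intros k Hk. destruct (q_facts S0 k HS Hk). lra. }
    lra.
  - pose proof (fwd_ind N (fun k => Sigma S0 c k ^3 / b k ^2 * exp (-(8 / b k ^2)))) as F.
    cbv beta in F.
    assert (F' : Sigma S0 c n ^3 / b n ^2 * exp (-(8 / b n ^2)) <=
                 Sigma S0 c 0 ^3 / b 0%nat ^2 * exp (-(8 / b 0%nat ^2))).
    { apply F; auto. intros k Hk. destruct (q_facts S0 k HS Hk). lra. }
    simpl Sigma in F'.
    assert (0 <= S0^3 / b 0%nat ^2).
    { apply Rle_mult_inv_pos. apply pow_le; lra. pose proof (b_q 0 ltac:(lia)). lra. }
    assert (exp (-(8 / b 0%nat ^2)) <= 1).
    { rewrite <- exp_0. apply exp_le'. pose proof (b_q 0 ltac:(lia)).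
      assert (0 <= 8 / b 0%nat^2) by (apply Rle_mult_inv_pos; lra). lra. }
    assert (F2 : Sigma S0 c n ^3 / b n ^2 * exp (-(8 / b n ^2)) <= S0^3 / b 0%nat ^2).
    { eapply Rle_trans. exact F'. rewrite <- (Rmult_1_r (S0^3 / b 0%nat ^2)) at 2.
      apply Rmult_le_compat_l; lra. }
    replace (Sigma S0 c n ^3 / b n ^2) with
      (Sigma S0 c n ^3 / b n ^2 * exp (-(8 / b n ^2)) * exp (8 / b n ^2)).
    2:{ rewrite Rmult_assoc, <- exp_plus. replace (-(8 / b n ^2) + 8 / b n ^2) with 0 by ring.
        rewrite exp_0. ring. }
    apply Rmult_le_compat_r. left; apply exp_pos. exact F2.
Qed.

End G.

Lemma lim_invN : is_lim_seq (fun N => / INR N) 0.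
Proof.
  pose proof (is_lim_seq_inv _ _ is_lim_seq_INR) as H.
  apply H. discriminate.
Qed.

Lemma lim_sqrt_dt : is_lim_seq (fun N => sqrt (dt N)) 0.
Proof.
  unfold dt. rewrite <- sqrt_0.
  apply (is_lim_seq_continuous sqrt (fun N => / INR N) 0).
  apply continuity_pt_sqrt. lra. apply lim_invN.
Qed.

Lemma sq_lim (x : nat -> R) (L B : R) :
  eventually (fun N => L - B / INR N <= x N <= L + B / INR N) -> is_lim_seq x L.
Proof.
  intros Hev. apply is_lim_seq_le_le_loc with (fun N => L - B * / INR N) (fun N => L + B * / INR N).
  - destruct Hev as [N0 HN0]. exists N0. intros n Hn. unfold Rdiv in HN0. apply HN0; auto.
  - assert (H1 : is_lim_seq (fun N => L - B * / INR N) (L - B * 0)).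
    { apply is_lim_seq_minus'. apply is_lim_seq_const.
      apply (is_lim_seq_scal_l _ B 0). apply lim_invN. }
    rewrite Rmult_0_r, Rminus_0_r in H1. exact H1.
  - assert (H1 : is_lim_seq (fun N => L + B * / INR N) (L + B * 0)).
    { apply is_lim_seq_plus'. apply is_lim_seq_const.
      apply (is_lim_seq_scal_l _ B 0). apply lim_invN. }
    rewrite Rmult_0_r, Rplus_0_r in H1. exact H1.
Qed.

Lemma lin_p (v : nat -> R) (A B : R) : 0 < A -> is_lim_seq v p_infty ->
  is_lim_seq (fun n => A * v n + B) p_infty.
Proof.
  intros HA Hv. apply is_lim_seq_spec in Hv. apply is_lim_seq_spec.
  intros M. destruct (Hv ((M - B)/A)) as [N0 HN0]. exists N0. intros n Hn.
  specialize (HN0 n Hn).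
  assert (A * ((M - B)/A) < A * v n) by (apply Rmult_lt_compat_l; auto).
  replace (A * ((M - B)/A)) with (M - B) in H by (field; lra). lra.
Qed.

Lemma sqrt_p (x : nat -> R) : is_lim_seq x p_infty -> is_lim_seq (fun n => sqrt (x n)) p_infty.
Proof.
  intros Hx. apply is_lim_seq_spec in Hx. apply is_lim_seq_spec.
  intros M. set (M' := Rmax M 0 + 1).
  assert (HM' : 0 < M') by (unfold M'; pose proof (Rmax_r M 0); lra).
  assert (HM2 : M < M') by (unfold M'; pose proof (Rmax_l M 0); lra).
  destruct (Hx (M'^2)) as [N0 HN0]. exists N0. intros n Hn.
  specialize (HN0 n Hn).
  assert (sqrt (M'^2) < sqrt (x n)).
  { apply sqrt_lt_1. nra. nra. exact HN0. }
  rewrite sqrt_pow2 in H by lra. lra.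
Qed.

Lemma cube_lim (x : nat -> R) (L : R) : 0 < L -> eventually (fun n => 0 < x n) ->
  is_lim_seq (fun n => x n ^ 3) (L^3) -> is_lim_seq x L.
Proof.
  intros HL Hpos Hx.
  assert (H0 : is_lim_seq (fun n => Rabs (x n ^3 - L^3) / L^2) 0).
  { replace 0 with (Rabs (L^3 - L^3) / L^2) by (rewrite Rminus_diag, Rabs_R0; field; lra).
    apply is_lim_seq_div'. apply (is_lim_seq_abs _ (L^3 - L^3)).
    apply is_lim_seq_minus'. exact Hx. apply is_lim_seq_const. apply is_lim_seq_const.
    apply pow_nonzero; lra. }
  apply is_lim_seq_le_le_loc with (fun n => L - Rabs (x n ^3 - L^3) / L^2)
     (fun n => L + Rabs (x n ^3 - L^3) / L^2).
  - destruct Hpos as [N0 HN0]. exists N0. intros n Hn. specialize (HN0 n Hn).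
    assert (E : x n ^3 - L^3 = (x n - L) * (x n^2 + x n * L + L^2)) by ring.
    rewrite E, Rabs_mult.
    assert (0 < x n ^2 + x n * L + L^2) by (assert (0 < x n * L) by (apply Rmult_lt_0_compat; lra);
       pose proof (pow2_ge_0 (x n)); pose proof (pow2_ge_0 L); lra).
    rewrite (Rabs_right (x n^2 + x n * L + L^2)) by lra.
    assert (HL2 : 0 < L^2) by nra.
    assert (Rabs (x n - L) <= Rabs (x n - L) * (x n ^ 2 + x n * L + L ^ 2) / L ^ 2).
    { apply Rmult_le_reg_r with (L^2). exact HL2.
      replace (Rabs (x n - L) * (x n ^ 2 + x n * L + L ^ 2) / L ^ 2 * L^2)
        with (Rabs (x n - L) * (x n ^ 2 + x n * L + L ^ 2)) by (field; lra).
      pose proof (Rabs_pos (x n - L)). apply Rmult_le_compat_l. lra.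
      assert (0 < x n * L) by (apply Rmult_lt_0_compat; lra).
      pose proof (pow2_ge_0 (x n)). lra. }
    pose proof (Rle_abs (x n - L)). pose proof (Rle_abs (-(x n - L))). rewrite Rabs_Ropp in H3.
    lra.
  - assert (H1 := is_lim_seq_minus' _ _ _ _ (is_lim_seq_const L) H0).
    rewrite Rminus_0_r in H1. exact H1.
  - assert (H1 := is_lim_seq_plus' _ _ _ _ (is_lim_seq_const L) H0).
    rewrite Rplus_0_r in H1. exact H1.
Qed.

Lemma idx_bounds N t : 0 < t -> INR N * t - 1 < INR (idx N t) <= INR N * t.
Proof.
  intros Ht. unfold idx. set (x := INR N * t).
  assert (Hx : 0 <= x) by (unfold x; pose proof (pos_INR N); nra).
  destruct (base_Int_part x) as [H1 H2].
  assert (Hz : (0 <= Int_part x)%Z).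
  { assert (-1 < IZR (Int_part x)) by lra. apply lt_IZR in H. lia. }
  rewrite INR_IZR_INZ, Z2Nat.id by exact Hz. lra.
Qed.

Lemma idx_le N t : (1 <= N)%nat -> 0 < t < 1 -> (idx N t <= N - 1)%nat.
Proof.
  intros HN Ht. destruct (idx_bounds N t ltac:(lra)) as [_ H].
  assert (INR N * t < INR N) by (assert (0 < INR N) by (apply lt_0_INR; lia); nra).
  assert (INR (idx N t) < INR N) by lra. apply INR_lt in H1. lia.
Qed.

Lemma idx_ge N t : 0 < t -> 1 <= INR N * t -> (1 <= idx N t)%nat.
Proof.
  intros Ht H. destruct (idx_bounds N t Ht) as [H1 _].
  destruct (idx N t) eqn:E. simpl in H1. lra. lia.
Qed.

Lemma ev_N0 t : 0 < t < 1 -> exists N0, forall N, (N0 <= N)%nat -> (2 <= N)%nat /\ 1 <= INR N * t.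
Proof.
  intros Ht. destruct (archimed_cor1 t ltac:(lra)) as [N0 [H1 H2]].
  assert (HN0 : 0 < INR N0) by (apply lt_0_INR; lia).
  assert (1 < INR N0 * t).
  { apply Rmult_lt_compat_l with (r := INR N0) in H1; auto.
    rewrite Rinv_r in H1 by lra. lra. }
  exists N0. intros N HN. apply le_INR in HN.
  assert (1 < INR N * t) by nra.
  split; [|lra].
  assert (1 < INR N) by nra. destruct N as [|[|N]]; simpl in *; try lra. lia.
Qed.

Lemma per_N (a b c : nat -> R) (S0 t : R) (N : nat) :
  0 < S0 -> 0 < t < 1 -> (2 <= N)%nat -> 1 <= INR N * t -> Hyp a b c N ->
  let m := idx N t in
  (1 <= m <= N-1)%nat /\ 0 < INR N /\
  0 < b m /\ 0 < c m /\ 3 * b m * c m <= 1 /\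
  - 3 * b m * c m + sqrt (c m ^2 + 1) * (1 - c m ^2) = 0 /\
  (INR N * (1-t) - 1)/3 <= b m ^2 <= INR N * (1-t) / 3 + 1/4 /\
  (INR N - 1)/3 <= b 0%nat ^2 <= (INR N - 1)/3 + 1/4 /\ 0 < b 0%nat /\
  Rabs (a m - b m / 2) <= 9/4 /\
  S0^3 / b 0%nat ^2 <= Sigma S0 c m ^3 / b m ^2 <= S0^3 / b 0%nat ^2 * exp (8 / b m ^2) /\
  Sigma S0 c m = Sigma S0 c (m-1)%nat / (1 + c m ^2).
Proof.
  intros HS Ht HN HNt H m.
  assert (HN1 : (1 <= N)%nat) by lia.
  assert (Hm : (1 <= m <= N-1)%nat) by (split; [apply idx_ge; lra| apply idx_le; auto]).
  destruct (idx_bounds N t ltac:(lra)) as [Ix1 Ix2]. fold m in Ix1, Ix2.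
  assert (HNp : 0 < INR N) by (apply lt_0_INR; lia).
  assert (EK : INR (N - 1 - m) = INR N - 1 - INR m).
  { rewrite minus_INR by lia. rewrite minus_INR by lia. simpl. lra. }
  assert (EK0 : INR (N - 1 - 0) = INR N - 1).
  { rewrite Nat.sub_0_r. rewrite minus_INR by lia. simpl. lra. }
  pose proof (b_up a b c N HN1 H m ltac:(lia)) as U1.
  pose proof (b_lo2 a b c N HN1 H m ltac:(lia)) as L1.
  pose proof (b_up a b c N HN1 H 0 ltac:(lia)) as U0.
  pose proof (b_lo2 a b c N HN1 H 0 ltac:(lia)) as L0.
  rewrite EK in U1, L1. rewrite EK0 in U0, L0.
  destruct (ineq a b c N HN1 H m Hm) as [_ [I2 _]]. cbv zeta in I2.
  split; [exact Hm|]. split; [exact HNp|].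
  split; [apply (bpos a b c N HN1 H); lia|].
  split; [apply (cpos a b c N H); lia|].
  split; [exact I2|].
  split.
  { destruct H as [_ [_ [_ [_ H5]]]]. destruct (H5 m Hm) as [_ [_ E3]]. exact E3. }
  split; [split; nra|].
  split; [split; lra|].
  split; [apply (bpos a b c N HN1 H); lia|].
  split; [apply (e_bd a b c N HN1 H); lia|].
  split; [apply (Q_bd a b c N HN1 H); auto; lia|].
  destruct m as [|m']. lia. simpl. rewrite Nat.sub_0_r. reflexivity.
Qed.

Lemma div_bounds (n Y A B : R) : 0 < n -> A*n - B <= Y <= A*n + B -> A - B/n <= Y/n <= A + B/n.
Proof.
  intros Hn [H1 H2]. split.
  - apply Rmult_le_reg_r with n; auto. replace ((A - B/n)*n) with (A*n - B) by (field; lra).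
    replace (Y/n*n) with Y by (field; lra). lra.
  - apply Rmult_le_reg_r with n; auto. replace ((A + B/n)*n) with (A*n + B) by (field; lra).
    replace (Y/n*n) with Y by (field; lra). lra.
Qed.

Lemma inv_s3 x : x / sqrt 3 = x * sqrt 3 / 3.
Proof.
  assert (Hs : 0 < sqrt 3) by (apply sqrt_lt_R0; lra).
  assert (E : sqrt 3 * sqrt 3 = 3) by (apply sqrt_sqrt; lra).
  set (s := sqrt 3) in *. clearbody s. rewrite <- E. field. lra.
Qed.

Lemma le_inv (x y : R) : 0 < y -> x * y <= 1 -> x <= / y.
Proof.
  intros Hy H. apply Rmult_le_reg_r with y; auto. rewrite Rinv_l by lra. lra.
Qed.

Theorem theorem6 (a b c : nat -> nat -> R) (S0 su : R) :
  0 < S0 -> 0 < su ->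
  (forall N : nat, (1 <= N)%nat ->
     (forall n : nat, (1 <= n <= N)%nat -> 0 < c N n) /\
     a N (N - 1)%nat = 0 /\
     b N (N - 1)%nat = 1 / 2 /\
     c N N = 1 /\
     (forall n : nat, (1 <= n <= N - 1)%nat ->
        a N (n - 1)%nat =
          a N n * sqrt (1 / ((c N n)^2 + 1))
          + b N n * (sqrt (1 / ((c N n)^2 + 1)))^3 * (c N n)^2 /\
        b N (n - 1)%nat =
          b N n * (sqrt (1 / ((c N n)^2 + 1)))^3 + c N n / ((c N n)^2 + 1) /\
        - 3 * b N n * c N n + sqrt ((c N n)^2 + 1) * (1 - (c N n)^2) = 0)) ->
  forall t : R, 0 < t < 1 ->
    is_lim_seq (fun N => c N (idx N t)) 0 /\
    is_lim_seq (fun N => b N (idx N t)) p_infty /\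
    is_lim_seq (fun N => a N (idx N t)) p_infty /\
    is_lim_seq (fun N => c N (idx N t) / sqrt (dt N))
      (sqrt 3 / 3 * (1 / sqrt (1 - t))) /\
    is_lim_seq (fun N => b N (idx N t) * sqrt (dt N))
      (sqrt 3 / 3 * sqrt (1 - t)) /\
    is_lim_seq (fun N => a N (idx N t) * sqrt (dt N))
      (sqrt 3 / 6 * sqrt (1 - t)) /\
    is_lim_seq (fun N => Sigma S0 (c N) (idx N t))
      (Rpower (1 - t) (1 / 3) * S0) /\
    is_lim_seq (fun N => lambda N S0 su (c N) (idx N t))
      (sqrt 3 * sqrt S0 / (3 * Rpower (1 - t) (1 / 3) * su)) /\
    is_lim_seq (fun N => beta N S0 su (c N) (idx N t) / dt N)
      (sqrt 3 * su / (3 * Rpower (1 - t) (2 / 3) * sqrt S0)).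
Proof.
  intros HS Hsu Hall t Ht.
  destruct (ev_N0 t Ht) as [N0 HN0].
  assert (P : forall N, (N0 <= N)%nat ->
    let m := idx N t in
    (1 <= m <= N-1)%nat /\ 0 < INR N /\
    0 < b N m /\ 0 < c N m /\ 3 * b N m * c N m <= 1 /\
    - 3 * b N m * c N m + sqrt (c N m ^2 + 1) * (1 - c N m ^2) = 0 /\
    (INR N * (1-t) - 1)/3 <= b N m ^2 <= INR N * (1-t) / 3 + 1/4 /\
    (INR N - 1)/3 <= b N 0%nat ^2 <= (INR N - 1)/3 + 1/4 /\ 0 < b N 0%nat /\
    Rabs (a N m - b N m / 2) <= 9/4 /\
    S0^3 / b N 0%nat ^2 <= Sigma S0 (c N) m ^3 / b N m ^2 <= S0^3 / b N 0%nat ^2 * exp (8 / b N m ^2) /\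
    Sigma S0 (c N) m = Sigma S0 (c N) (m-1)%nat / (1 + c N m ^2)).
  { intros N HN. destruct (HN0 N HN) as [H2 H3]. apply per_N; auto. apply Hall. lia. }
  assert (LB2 : is_lim_seq (fun N => b N (idx N t) ^2 / INR N) ((1-t)/3)).
  { apply sq_lim with (B := 1). exists N0. intros N HN.
    destruct (P N HN) as [_ [HNp [_ [_ [_ [_ [[Lb Ub] _]]]]]]].
    apply div_bounds; auto. split; nra. }
  assert (LB02 : is_lim_seq (fun N => b N 0%nat ^2 / INR N) (1/3)).
  { apply sq_lim with (B := 1). exists N0. intros N HN.
    destruct (P N HN) as [_ [HNp [_ [_ [_ [_ [_ [[Lb Ub] _]]]]]]]].
    apply div_bounds; auto. split; nra. }
  set (LB := sqrt ((1-t)/3)).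
  assert (HLB : 0 < LB) by (apply sqrt_lt_R0; lra).
  assert (Lbs : is_lim_seq (fun N => b N (idx N t) * sqrt (dt N)) LB).
  { pose proof (is_lim_seq_continuous sqrt _ ((1-t)/3) (continuity_pt_sqrt ((1-t)/3) ltac:(lra)) LB2) as H.
    apply is_lim_seq_ext_loc with (2 := H). exists N0. intros N HN.
    destruct (P N HN) as [_ [HNp [Hb _]]].
    unfold dt, Rdiv. rewrite sqrt_mult_alt by (apply pow2_ge_0). rewrite sqrt_pow2 by lra. reflexivity. }
  assert (Binf : is_lim_seq (fun N => b N (idx N t)) p_infty).
  { apply is_lim_seq_le_p_loc with (fun N => sqrt ((1-t)/3 * INR N + -1/3)).
    - exists N0. intros N HN. destruct (P N HN) as [_ [HNp [Hb [_ [_ [_ [[Lb Ub] _]]]]]]].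
      rewrite <- (sqrt_pow2 (b N (idx N t))) by lra. apply sqrt_le_1_alt. lra.
    - apply sqrt_p. apply lin_p. lra. apply is_lim_seq_INR. }
  assert (Ivb : is_lim_seq (fun N => / b N (idx N t)) 0).
  { pose proof (is_lim_seq_inv _ _ Binf ltac:(discriminate)) as H. exact H. }
  assert (C0 : is_lim_seq (fun N => c N (idx N t)) 0).
  { apply is_lim_seq_le_le_loc with (fun _ => 0) (fun N => 1/3 * / b N (idx N t)).
    - exists N0. intros N HN. destruct (P N HN) as [_ [HNp [Hb [Hc [I2 _]]]]].
      split. lra. replace (1/3 * / b N (idx N t)) with (/ (3 * b N (idx N t))) by (field; lra).
      apply le_inv. lra. lra.
    - apply is_lim_seq_const.
    - pose proof (is_lim_seq_mult' _ _ _ _ (is_lim_seq_const (1/3)) Ivb) as H.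
      rewrite Rmult_0_r in H. exact H. }
  assert (Lsd : forall N, (N0 <= N)%nat -> 0 < sqrt (dt N)).
  { intros N HN. destruct (P N HN) as [_ [HNp _]]. apply sqrt_lt_R0. unfold dt.
    apply Rinv_0_lt_compat. exact HNp. }
  set (Lc := 1 * (1 - 0*0) / (3 * LB)).
  assert (Lcs : is_lim_seq (fun N => c N (idx N t) / sqrt (dt N)) Lc).
  { assert (Hc2 : is_lim_seq (fun N => c N (idx N t) ^2) (0*0)).
    { apply is_lim_seq_ext with (fun N => c N (idx N t) * c N (idx N t)).
      intros; ring. apply is_lim_seq_mult'; exact C0. }
    assert (Hs : is_lim_seq (fun N => sqrt (c N (idx N t) ^2 + 1)) 1).
    { pose proof (is_lim_seq_plus' _ _ _ _ Hc2 (is_lim_seq_const 1)) as H.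
      pose proof (is_lim_seq_continuous sqrt _ _ (continuity_pt_sqrt (0*0+1) ltac:(lra)) H) as H'.
      replace (0*0+1) with 1 in H' by ring. rewrite sqrt_1 in H'. exact H'. }
    pose proof (is_lim_seq_minus' _ _ _ _ (is_lim_seq_const 1) Hc2) as Hu.
    pose proof (is_lim_seq_mult' _ _ _ _ Hs Hu) as Hnum.
    pose proof (is_lim_seq_mult' _ _ _ _ (is_lim_seq_const 3) Lbs) as Hden.
    pose proof (is_lim_seq_div' _ _ _ _ Hnum Hden ltac:(lra)) as H.
    apply is_lim_seq_ext_loc with (2 := H). exists N0. intros N HN.
    pose proof (Lsd N HN).
    destruct (P N HN) as [_ [HNp [Hb [Hc [I2 [E3 _]]]]]].
    replace (sqrt (c N (idx N t) ^ 2 + 1) * (1 - c N (idx N t) ^ 2))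
      with (3 * b N (idx N t) * c N (idx N t)) by lra.
    field. lra. }
  assert (Ainf : is_lim_seq (fun N => a N (idx N t)) p_infty).
  { apply is_lim_seq_le_p_loc with (fun N => 1/2 * b N (idx N t) + -(9/4)).
    - exists N0. intros N HN. destruct (P N HN) as [_ [_ [_ [_ [_ [_ [_ [_ [_ [He _]]]]]]]]]].
      pose proof (Rle_abs (-(a N (idx N t) - b N (idx N t) / 2))). rewrite Rabs_Ropp in H. lra.
    - apply lin_p. lra. exact Binf. }
  assert (Las : is_lim_seq (fun N => a N (idx N t) * sqrt (dt N)) (LB * (1/2) + 0)).
  { assert (E0 : is_lim_seq (fun N => (a N (idx N t) - b N (idx N t)/2) * sqrt (dt N)) 0).
    { apply is_lim_seq_le_le_loc with (fun N => -(9/4) * sqrt (dt N)) (fun N => 9/4 * sqrt (dt N)).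
      - exists N0. intros N HN. pose proof (Lsd N HN).
        destruct (P N HN) as [_ [_ [_ [_ [_ [_ [_ [_ [_ [He _]]]]]]]]]].
        pose proof (Rle_abs (-(a N (idx N t) - b N (idx N t) / 2))). rewrite Rabs_Ropp in H0.
        pose proof (Rle_abs (a N (idx N t) - b N (idx N t) / 2)).
        split; nra.
      - pose proof (is_lim_seq_mult' _ _ _ _ (is_lim_seq_const (-(9/4))) lim_sqrt_dt) as H.
        rewrite Rmult_0_r in H. exact H.
      - pose proof (is_lim_seq_mult' _ _ _ _ (is_lim_seq_const (9/4)) lim_sqrt_dt) as H.
        rewrite Rmult_0_r in H. exact H. }
    pose proof (is_lim_seq_plus' _ _ _ _ (is_lim_seq_mult' _ _ _ _ Lbs (is_lim_seq_const (1/2))) E0) as H.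
    apply is_lim_seq_ext with (2 := H). intros N. field. }
  assert (LR : is_lim_seq (fun N => b N (idx N t) ^2 / b N 0%nat ^2) (((1-t)/3)/(1/3))).
  { pose proof (is_lim_seq_div' _ _ _ _ LB2 LB02 ltac:(lra)) as H.
    apply is_lim_seq_ext_loc with (2 := H). exists N0. intros N HN.
    destruct (P N HN) as [_ [HNp [_ [_ [_ [_ [_ [_ [Hb0 _]]]]]]]]].
    field. split; lra. }
  assert (LEx : is_lim_seq (fun N => exp (8 / b N (idx N t) ^2)) 1).
  { pose proof (is_lim_seq_mult' _ _ _ _ (is_lim_seq_const 8) (is_lim_seq_mult' _ _ _ _ Ivb Ivb)) as H.
    pose proof (is_lim_seq_continuous exp _ _ (derivable_continuous_pt _ _ (derivable_pt_exp _)) H) as H'.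
    replace (8 * (0 * 0)) with 0 in H' by ring. rewrite exp_0 in H'.
    apply is_lim_seq_ext_loc with (2 := H'). exists N0. intros N HN.
    destruct (P N HN) as [_ [HNp [Hb _]]]. f_equal. field. lra. }
  set (p := Rpower (1-t) (1/6)).
  assert (Hp : 0 < p) by (unfold p, Rpower; apply exp_pos).
  assert (Hpk : forall k, Rpower (1-t) (1/6 * INR k) = p^k).
  { intros k. rewrite <- Rpower_mult. apply Rpower_pow. exact Hp. }
  assert (P6 : 1 - t = p^6).
  { rewrite <- Hpk. replace (1/6 * INR 6) with 1 by (simpl; field). rewrite Rpower_1; lra. }
  assert (P2 : Rpower (1-t) (1/3) = p^2).
  { rewrite <- Hpk. f_equal. simpl; field. }
  assert (P4 : Rpower (1-t) (2/3) = p^4).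
  { rewrite <- Hpk. f_equal. simpl; field. }
  assert (P3 : sqrt (1-t) = p^3).
  { rewrite <- Rpower_sqrt by lra. rewrite <- Hpk. f_equal. simpl; field. }
  set (L := S0 * p^2).
  assert (HL : 0 < L) by (unfold L; apply Rmult_lt_0_compat; [lra| apply pow_lt; lra]).
  assert (LSig : is_lim_seq (fun N => Sigma S0 (c N) (idx N t)) L).
  { apply cube_lim. exact HL.
    - exists 0%nat. intros N _. apply Sig_pos. exact HS.
    - replace (L^3) with (S0^3 * ((1-t)/3/(1/3))) by (unfold L; rewrite P6; field).
      apply is_lim_seq_le_le_loc with (fun N => S0^3 * (b N (idx N t) ^2 / b N 0%nat ^2))
         (fun N => S0^3 * (b N (idx N t) ^2 / b N 0%nat ^2) * exp (8 / b N (idx N t) ^2)).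
      + exists N0. intros N HN.
        destruct (P N HN) as [_ [HNp [Hb [_ [_ [_ [_ [_ [Hb0 [_ [[Q1 Q2] _]]]]]]]]]]].
        assert (Hb2 : 0 < b N (idx N t) ^2) by nra.
        split.
        * apply Rmult_le_compat_r with (r := b N (idx N t) ^2) in Q1; [|lra].
          replace (Sigma S0 (c N) (idx N t) ^ 3 / b N (idx N t) ^ 2 * b N (idx N t) ^ 2)
            with (Sigma S0 (c N) (idx N t) ^ 3) in Q1 by (field; lra).
          replace (S0 ^ 3 * (b N (idx N t) ^ 2 / b N 0%nat ^ 2))
            with (S0 ^ 3 / b N 0%nat ^ 2 * b N (idx N t) ^ 2) by (field; lra). exact Q1.
        * apply Rmult_le_compat_r with (r := b N (idx N t) ^2) in Q2; [|lra].
          replace (Sigma S0 (c N) (idx N t) ^ 3 / b N (idx N t) ^ 2 * b N (idx N t) ^ 2)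
            with (Sigma S0 (c N) (idx N t) ^ 3) in Q2 by (field; lra).
          eapply Rle_trans. exact Q2. right. field. lra.
      + apply is_lim_seq_mult'. apply is_lim_seq_const. exact LR.
      + pose proof (is_lim_seq_mult' _ _ _ _ (is_lim_seq_mult' _ _ _ _ (is_lim_seq_const (S0^3)) LR) LEx) as H.
        rewrite Rmult_1_r in H. exact H. }
  assert (Hc2 : is_lim_seq (fun N => c N (idx N t) ^2) (0*0)).
  { apply is_lim_seq_ext with (fun N => c N (idx N t) * c N (idx N t)).
    intros; ring. apply is_lim_seq_mult'; exact C0. }
  assert (LSig' : is_lim_seq (fun N => Sigma S0 (c N) (idx N t - 1)) L).
  { pose proof (is_lim_seq_mult' _ _ _ _ LSig (is_lim_seq_plus' _ _ _ _ (is_lim_seq_const 1) Hc2)) as H.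
    replace (L * (1 + 0*0)) with L in H by ring.
    apply is_lim_seq_ext_loc with (2 := H). exists N0. intros N HN.
    destruct (P N HN) as [_ [HNp [Hb [_ [_ [_ [_ [_ [Hb0 [_ [_ ES]]]]]]]]]]].
    rewrite ES. field. nra. }
  assert (Lsq : is_lim_seq (fun N => sqrt (Sigma S0 (c N) (idx N t - 1))) (sqrt L)).
  { apply is_lim_seq_continuous. apply continuity_pt_sqrt. lra. exact LSig'. }
  assert (HsL : 0 < sqrt L) by (apply sqrt_lt_R0; lra).
  assert (Lbeta : is_lim_seq (fun N => beta N S0 su (c N) (idx N t) / dt N) (Lc * su / sqrt L)).
  { pose proof (is_lim_seq_div' _ _ _ _ (is_lim_seq_mult' _ _ _ _ Lcs (is_lim_seq_const su)) Lsq ltac:(lra)) as H.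
    apply is_lim_seq_ext_loc with (2 := H). exists N0. intros N HN.
    pose proof (Lsd N HN). pose proof (Sig_pos (c N) S0 (idx N t - 1) HS) as HSp.
    unfold beta.
    set (q := sqrt (Sigma S0 (c N) (idx N t - 1))).
    assert (Hq : 0 < q) by (apply sqrt_lt_R0; lra).
    set (sd := sqrt (dt N)) in *.
    assert (Ed : dt N = sd * sd) by (unfold sd; rewrite sqrt_sqrt; [reflexivity| unfold dt; destruct (P N HN) as [_ [HNp _]]; left; apply Rinv_0_lt_compat; lra]).
    rewrite Ed. field. split; lra. }
  assert (Llam : is_lim_seq (fun N => lambda N S0 su (c N) (idx N t)) (Lc * sqrt L / (su * (1 + 0*0)))).
  { pose proof (is_lim_seq_div' _ _ _ _ (is_lim_seq_mult' _ _ _ _ Lcs Lsq)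
      (is_lim_seq_mult' _ _ _ _ (is_lim_seq_const su) (is_lim_seq_plus' _ _ _ _ (is_lim_seq_const 1) Hc2))
      ltac:(nra)) as H.
    apply is_lim_seq_ext_loc with (2 := H). exists N0. intros N HN.
    pose proof (Lsd N HN). pose proof (Sig_pos (c N) S0 (idx N t - 1) HS) as HSp.
    unfold lambda, beta.
    set (q := sqrt (Sigma S0 (c N) (idx N t - 1))).
    assert (Hq : 0 < q) by (apply sqrt_lt_R0; lra).
    assert (Eq : Sigma S0 (c N) (idx N t - 1) = q * q) by (unfold q; rewrite sqrt_sqrt; lra).
    set (sd := sqrt (dt N)) in *.
    assert (Ed : dt N = sd * sd) by (unfold sd; rewrite sqrt_sqrt; [reflexivity| unfold dt; destruct (P N HN) as [_ [HNp _]]; left; apply Rinv_0_lt_compat; lra]).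
    rewrite Ed. rewrite Eq. clearbody q sd.
    destruct (P N HN) as [_ [HNp [Hb [Hc _]]]].
    assert (0 < su^2 * (sd*sd)) by (apply Rmult_lt_0_compat; nra).
    pose proof (pow2_ge_0 (c N (idx N t) * su * sd)).
    pose proof (pow2_ge_0 (c N (idx N t))).
    field. repeat split; lra. }
  assert (Hs3 : 0 < sqrt 3) by (apply sqrt_lt_R0; lra).
  assert (Es3 : sqrt 3 * sqrt 3 = 3) by (apply sqrt_sqrt; lra).
  assert (ELB : LB = p^3 / sqrt 3) by (unfold LB; rewrite sqrt_div_alt by lra; rewrite P3; reflexivity).
  assert (EsL : sqrt L = sqrt S0 * p).
  { unfold L. rewrite sqrt_mult_alt by lra. rewrite sqrt_pow2 by lra. reflexivity. }
  assert (Hp3 : 0 < p^3) by (apply pow_lt; lra).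
  assert (HsS : 0 < sqrt S0) by (apply sqrt_lt_R0; lra).
  split; [exact C0|].
  split; [exact Binf|].
  split; [exact Ainf|].
  split.
  { replace (sqrt 3 / 3 * (1 / sqrt (1 - t))) with Lc. exact Lcs.
    unfold Lc. rewrite ELB, P3. field. split; lra. }
  split.
  { replace (sqrt 3 / 3 * sqrt (1 - t)) with LB. exact Lbs.
    rewrite ELB, P3, inv_s3. field. }
  split.
  { replace (sqrt 3 / 6 * sqrt (1 - t)) with (LB * (1/2) + 0). exact Las.
    rewrite ELB, P3, inv_s3. field. }
  split.
  { replace (Rpower (1 - t) (1 / 3) * S0) with L. exact LSig.
    unfold L. rewrite P2. ring. }
  split.
  { replace (sqrt 3 * sqrt S0 / (3 * Rpower (1 - t) (1 / 3) * su)) with (Lc * sqrt L / (su * (1 + 0*0))).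
    exact Llam. unfold Lc. rewrite EsL, ELB, P2. field. repeat split; lra. }
  { replace (sqrt 3 * su / (3 * Rpower (1 - t) (2 / 3) * sqrt S0)) with (Lc * su / sqrt L).
    exact Lbeta. unfold Lc. rewrite EsL, ELB, P4. field. repeat split; lra. }
Qed.
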